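(* Let $\alpha_j\ge0$, $j=1,2,\dots$, and define $$A_k:=\alpha_k+\sum_{0<p<k}\ \sum_{0<i_1<\dots<i_p<k}\alpha_{i_1}\alpha_{i_2-i_1}\cdots\alpha_{i_p-i_{p-1}}\alpha_{k-i_p},\qquad k=1,2,\dots$$ Assume $A:=\sum_{j=1}^\infty\alpha_j<1$ and $\alpha_j\le c\,j^{-\gamma}$ for all $j\ge1$, for some $c>0$ and $\gamma>1$. Then there exists $C>0$ such that $A_k\le C\,k^{-\gamma}$ for all $k\ge1$. *)

(* Defs.v *)
From HB Require Import structures.
From mathcomp Require Import all_boot all_order all_algebra.
From mathcomp Require Import all_classical all_reals all_analysis.
Set Implicit Arguments. Unset Strict Implicit. Unset Printing Implicit Defensive.
Import Order.TTheory GRing.Theory Num.Theory.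
Local Open Scope ring_scope.

(* Written literally as a sum over all subsets {i_1<...<i_p} of {1,...,k-1}
   (the empty subset, p = 0, gives the term alpha_k); for such a subset the
   term is the product of alpha over the consecutive gaps of
   0 < i_1 < ... < i_p < k. *)
Definition gaps (k : nat) (s : seq nat) : seq nat :=
  pairmap (fun a b => (b - a)%N) 0%N (rcons s k).

Definition Acoef (R : realType) (alpha : nat -> R) (k : nat) : R :=
  \sum_(S : {set 'I_k} | [forall i in S, (0 < val i)%N])
     \prod_(g <- gaps k (sort leq [seq val i | i in S])) alpha g.

(* Main.v *)
Require Import Defs.
From HB Require Import structures.
From mathcomp Require Import all_boot all_order all_algebra.
From mathcomp Require Import all_classical all_reals all_analysis.
From mathcomp Require Import ring lra.
Import Order.TTheory GRing.Theory Num.Theory numFieldNormedType.Exports.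
Local Open Scope ring_scope.

Lemma pairmap_rcons' (T U : Type) (f : T -> T -> U) x t y :
  pairmap f x (rcons t y) = rcons (pairmap f x t) (f (last x t) y).
Proof. by elim: t x => [|z t IH] x //=; rewrite IH. Qed.

Lemma gaps_rcons k j s : gaps k (rcons s j) = rcons (gaps j s) (k - j)%N.
Proof. by rewrite /gaps pairmap_rcons' last_rcons. Qed.

Lemma memL m (A : {set 'I_m.+1}) z :
  (z \in [seq val x | x in A]) = (z < m.+1)%N && (inord z \in A).
Proof.
apply/mapP/andP => [[x xA ->]|[zm zA]].
  by split; [exact: ltn_ord | rewrite inord_val -mem_enum].

by exists (inord z); [rewrite mem_enum | rewrite /= inordK].
Qed.

Lemma uniqL k (A : {set 'I_k}) : uniq [seq val x | x in A].
Proof. by rewrite map_inj_uniq ?enum_uniq //; apply: val_inj. Qed.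

Lemma sorted_rcons_lt (L : seq nat) j :
  sorted leq L -> (forall x, x \in L -> x < j)%N -> sorted leq (rcons L j).
Proof.
case: L => [|x L] //= sL hL; rewrite rcons_path sL /=.
by apply/ltnW/hL; apply: mem_last.
Qed.

Definition Pp k (S : {set 'I_k}) := [forall x in S, (0 < val x)%N].
Definition mx k (S : {set 'I_k}) := (\max_(x in S) val x)%N.
Definition Fg (R : realType) (alpha : nat -> R) k (S : {set 'I_k}) :=
  \prod_(g <- gaps k (sort leq [seq val i | i in S])) alpha g.

Arguments Pp {k} S.
Arguments mx {k} S.
Arguments Fg {R} alpha {k} S.

Lemma AcoefE (R : realType) (alpha : nat -> R) k :
  Acoef alpha k = \sum_(S : {set 'I_k} | Pp S) Fg alpha S.
Proof. by []. Qed.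

Section Rec.
Variable n i : nat.
Hypothesis hi : (i < n)%N.
Let hj : (i.+1 < n.+1)%N. Proof. by []. Qed.
Let J : 'I_n.+1 := Ordinal hj.
Let wid : 'I_i.+1 -> 'I_n.+1 := widen_ord (ltnW hj).
Let h (S : {set 'I_i.+1}) : {set 'I_n.+1} := wid @: S :|: [set J].

Lemma mem_h S (y : 'I_n.+1) :
  (y \in h S) = (val y == i.+1) || ((val y < i.+1)%N && (inord (val y) \in S)).
Proof.
rewrite /h finset.in_setU finset.in_set1 -val_eqE /=; case: eqP => [_|yJ]; rewrite ?orbT ?orbF //.
apply/finset.imsetP/andP => [[x xS ->]|[yl yS]].
  by rewrite /= ltn_ord; split => //; rewrite inord_val.
by exists (inord y) => //; apply: val_inj; rewrite /= inordK.
Qed.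

Lemma mem_hw S x : (wid x \in h S) = (x \in S).
Proof.
by rewrite mem_h /= ltn_ord inord_val (ltn_eqF (ltn_ord x)).
Qed.

Lemma sort_h S : sort leq [seq val y | y in h S] =
   rcons (sort leq [seq val x | x in S]) i.+1.
Proof.
have sL : sorted leq (rcons (sort leq [seq val x | x in S]) i.+1).
  apply: sorted_rcons_lt; first by apply: sort_sorted; exact: leq_total.
  by move=> x; rewrite mem_sort memL => /andP [].
rewrite -(sorted_sort leq_trans sL).
apply/(perm_sortP leq_total leq_trans anti_leq).
apply: uniq_perm; first exact: uniqL.
  by rewrite rcons_uniq sort_uniq uniqL mem_sort memL ltnn.
move=> z; rewrite mem_rcons in_cons mem_sort !memL mem_h.
case: (ltnP z n.+1) => zn /=; first by rewrite !inordK.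
rewrite gtn_eqF ?(leq_trans _ zn) //= ltnNge (leq_trans _ zn) //.
by rewrite ltnW.
Qed.

Lemma P_h S : Pp (h S) = Pp S.
Proof.
apply/forall_inP/forall_inP => H x.
  by rewrite -(mem_hw S x) => /H.
rewrite mem_h; case/orP => [/eqP -> //|/andP [xl /H]].
by rewrite /= inordK.
Qed.

Lemma mx_h S : mx (h S) = i.+1.
Proof.
apply/eqP; rewrite eqn_leq; apply/andP; split.
  apply/bigmax_leqP => y; rewrite mem_h; case/orP => [/eqP -> //|/andP [] ].
  by move/ltnW.
have -> : i.+1 = val J by [].
by apply: leq_bigmax_cond; rewrite mem_h eqxx.
Qed.

Lemma img (S : {set 'I_n.+1}) :
  (S \in [set h x | x in [set S' | Pp S']]) = Pp S && (mx S == i.+1).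
Proof.
apply/finset.imsetP/andP => [[S' ]|[PS /eqP mS]].
  by rewrite finset.inE => PS' ->; rewrite P_h mx_h.
have yle : forall y, y \in S -> (val y <= i.+1)%N.
  by move=> y yS; rewrite -mS; apply: (leq_bigmax_cond (F := fun x : 'I_n.+1 => val x)).
exists [set x | wid x \in S].
  rewrite finset.inE; apply/forall_inP => x; rewrite finset.inE => /(forall_inP PS).
  by [].
apply/setP => y; rewrite mem_h finset.inE.
case: (boolP (y \in S)) => yS.
  case: eqP => //= yn.
  have yl : (val y < i.+1)%N by rewrite ltn_neqAle yle ?andbT; [apply/eqP|].
  rewrite yl /=; suff -> : wid (inord y) = y by [].
  by apply: val_inj; rewrite /= inordK.
apply/esym/negP => /orP [/eqP yn|/andP [yl]].
  have Sgt0 : (0 < #|S|)%N.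
    rewrite card_gt0; apply/negP => /eqP S0.
    by move: mS; rewrite S0 /mx big_set0.
  have [y0 y0S] := eq_bigmax_cond (fun x : 'I_n.+1 => val x) Sgt0.
  rewrite -/(mx S) mS => y0n.
  have yy : y = y0 by apply: val_inj; rewrite yn y0n.
  by move: yS; rewrite yy y0S.
suff -> : wid (inord y) = y by rewrite (negbTE yS).
by apply: val_inj; rewrite /= inordK.
Qed.

Lemma F_h (R : realType) (alpha : nat -> R) S :
  Fg alpha (h S) = alpha (n - i)%N * Fg alpha S.
Proof.
by rewrite /Fg sort_h gaps_rcons big_rcons /= subSS mulrC.
Qed.

Lemma h_inj : {in [set S' | Pp S'] &, injective h}.
Proof.
move=> S1 S2 _ _ e; apply/setP => x.
by rewrite -mem_hw e mem_hw.
Qed.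

Lemma block (R : realType) (alpha : nat -> R) :
  \sum_(S : {set 'I_n.+1} | Pp S && (mx S == i.+1)) Fg alpha S
  = alpha (n - i)%N * Acoef alpha i.+1.
Proof.
rewrite AcoefE big_distrr /=.
transitivity (\sum_(S' in [set S' : {set 'I_i.+1} | Pp S']) Fg alpha (h S')).
  rewrite -(big_imset _ h_inj); apply: eq_bigl => S.
  by rewrite img.
by apply: eq_big => [S|S _]; rewrite ?finset.inE // F_h.
Qed.
End Rec.

Lemma mx_lt n (S : {set 'I_n.+1}) : (mx S < n.+1)%N.
Proof. rewrite ltnS; apply/bigmax_leqP => x _; rewrite -ltnS; exact: ltn_ord. Qed.

Lemma Arec (R : realType) (alpha : nat -> R) n :
  Acoef alpha n.+1 = alpha n.+1 + \sum_(i < n) alpha (n - i)%N * Acoef alpha i.+1.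
Proof.
rewrite AcoefE (partition_big (fun S : {set 'I_n.+1} => (inord (mx S) : 'I_n.+1)) xpredT) //=.
rewrite big_ord_recl; congr (_ + _).
  rewrite (big_pred1 finset.set0).
    rewrite /Fg; case E: [seq \val i | i in (finset.set0 : {set 'I_n.+1})] => [|x s].
      by rewrite /= /gaps /= big_seq1 subn0.
    have : x \in [seq \val i | i in (finset.set0 : {set 'I_n.+1})] by rewrite E mem_head.
    by rewrite memL finset.in_set0 andbF.
  move=> S /=; apply/andP/eqP => [[PS /eqP]|->].
    move/(congr1 val); rewrite /= inordK ?mx_lt // => m0.
    apply/setP => x; rewrite finset.in_set0; apply/negP => xS.
    have := leq_bigmax_cond (P := mem S) (F := fun x : 'I_n.+1 => val x) x xS; rewrite -/(mx S) m0.
    by rewrite leqn0 => /eqP x0; move: (forall_inP PS x xS); rewrite x0.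
  split; first by apply/forall_inP => x; rewrite finset.in_set0.
  by apply/eqP/val_inj; rewrite /= /mx big_set0 inordK.
apply: eq_bigr => i _.
rewrite -(@block n i (ltn_ord i) R alpha); apply: eq_bigl => S.
congr (_ && _); apply/eqP/eqP => [/(congr1 val)|e].
  by rewrite /= inordK ?mx_lt.
by apply: val_inj; rewrite /= inordK ?mx_lt // e.
Qed.

Lemma exch (R : realType) (f g : nat -> R) N :
  \sum_(0 <= n < N) \sum_(0 <= i < n) f (n - i)%N * g i =
  \sum_(0 <= i < N) g i * \sum_(1 <= d < N - i) f d.
Proof.
elim: N => [|N IH]; first by rewrite !big_geq.
rewrite [LHS]big_nat_recr //= IH [RHS]big_nat_recr //= subSn // subnn.
rewrite [X in g N * X]big_geq // (mulr0 (g N)) [RHS]addr0.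
rewrite -big_split; apply: eq_big_nat => i /andP [_ iN].
have h1 : (1 <= N - i)%N by rewrite subn_gt0.
rewrite (subSn (ltnW iN)) (big_nat_recr _ _ _ h1) mulrDr (mulrC (f _)).
reflexivity.
Qed.

Section An.
Variables (R : realType) (alpha : nat -> R).
Hypothesis ha0 : forall j : nat, (0 < j)%N -> 0 <= alpha j.
Let a k := Acoef alpha k.

Lemma a_ge0 n : 0 <= a n.+1.
Proof.
elim/ltn_ind: n => n IH; rewrite /a Arec addr_ge0 ?ha0 //.
apply: sumr_ge0 => i _; apply: mulr_ge0; first by apply: ha0; rewrite subn_gt0.
exact: IH.
Qed.

Let u := fun j : nat => alpha j.+1.
Let T := limn (series u).
Hypothesis hcv : cvgn (series u).

Lemma ser_le m : series u m <= T.
Proof.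
apply: nondecreasing_cvgn_le => //.
by apply: (nondecreasing_series (P := xpredT) (m := 0%N)) => k _ _; apply: ha0.
Qed.

Lemma T_ge0 : 0 <= T.
Proof. by apply: le_trans (ser_le 0); rewrite /series /= big_geq. Qed.

Lemma sumd_le m : \sum_(1 <= d < m) alpha d <= T.
Proof. by rewrite big_add1; apply: ser_le. Qed.

Lemma sumrev_le n : \sum_(i < n) alpha (n - i)%N <= T.
Proof.
rewrite -(big_mkord xpredT (fun i => alpha (n - i)%N)) big_nat_rev /= add0n.
suff -> : (\sum_(0 <= i < n) alpha (n - (n - i.+1))%N) = series u n by apply: ser_le.
rewrite /series /=; apply: eq_big_nat => i /andP [_ iN].
by rewrite (subKn iN).
Qed.

Variable T1 : R.
Hypothesis hT1 : T <= T1.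
Hypothesis hT11 : T1 < 1.

Lemma S_le N : \sum_(0 <= n < N) a n.+1 <= T1 / (1 - T1).
Proof.
have p : 0 < 1 - T1 by rewrite subr_gt0.
rewrite ler_pdivlMr // mulrBr mulr1 lerBlDr.
set S := \sum_(0 <= n < N) a n.+1.
have eS : S = \sum_(0 <= n < N) alpha n.+1 +
   \sum_(0 <= n < N) \sum_(0 <= i < n) alpha (n - i)%N * a i.+1.
  rewrite -big_split /=; apply: eq_big_nat => n _.
  by rewrite /a Arec big_mkord.
rewrite {1}eS exch.
apply: lerD; first by apply: le_trans hT1; exact: ser_le.
rewrite /S big_distrl; apply: ler_sum => i _.
apply: ler_wpM2l; first exact: a_ge0.
exact: le_trans (sumd_le _) hT1.
Qed.

Variables c gamma b : R.
Hypotheses (hc : 0 < c) (hg : 0 < gamma) (hb0 : 0 < b) (hb1 : b < 1).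
Hypothesis hal : forall j : nat, (0 < j)%N -> alpha j <= c * (j%:R) `^ (- gamma).
Hypothesis hrho : b `^ (- gamma) * T1 < 1.
Let w (x : R) := x `^ (- gamma).
Let e := 1 - b.
Let S0 := T1 / (1 - T1).
Let C := (c + c * w e * S0) / (1 - w b * T1).

Lemma wle x y : 0 < x -> x <= y -> w y <= w x.
Proof.
move=> x0 xy; have y0 : 0 < y by apply: lt_le_trans xy.
rewrite /w !powRN lef_pV2 ?posrE ?powR_gt0 //.
by apply: (ge0_ler_powR (ltW hg)) => //; rewrite nnegrE ltW.
Qed.

Lemma wM x y : 0 <= x -> 0 <= y -> w (x * y) = w x * w y.
Proof. by move=> x0 y0; rewrite /w powRM. Qed.

Lemma w_ge0 x : 0 <= w x.
Proof. exact: powR_ge0. Qed.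

Lemma T1_ge0 : 0 <= T1.
Proof. exact: le_trans T_ge0 hT1. Qed.

Lemma C_gt0 : 0 < C.
Proof.
rewrite /C divr_gt0 ?subr_gt0 //; apply: (lt_le_trans hc); rewrite lerDl.
rewrite mulr_ge0 ?mulr_ge0 ?w_ge0 ?(ltW hc) //.
  exact: T1_ge0.
by rewrite invr_ge0 subr_ge0 ltW.
Qed.

Lemma mainb n : a n.+1 <= C * w n.+1%:R.
Proof.
elim/ltn_ind: n => n IH.
set k : R := n.+1%:R.
have k0 : 0 < k by rewrite /k ltr0n.
have e0 : 0 < e by rewrite /e subr_gt0.
have C0 := C_gt0.
have key : forall i : 'I_n, alpha (n - i)%N * a i.+1 <=
    c * w e * w k * a i.+1 + C * w b * w k * alpha (n - i)%N.
  move=> i.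
  have dpos : (0 < n - i)%N by rewrite subn_gt0.
  have jd : i.+1%:R + (n - i)%N%:R = k :> R.
    by rewrite -natrD /k addSn subnKC // ltnW.
  have ad := ha0 _ dpos.
  have aj := a_ge0 i.
  case: (lerP (e * k) (n - i)%N%:R) => h.
    apply: le_trans (_ : _ <= c * w e * w k * a i.+1) _; last first.
      rewrite lerDl; apply: (mulr_ge0 (mulr_ge0 (mulr_ge0 (ltW C0) (w_ge0 _)) (w_ge0 _)) ad).
    apply: (ler_wpM2r aj); apply: le_trans (hal _ dpos) _.
    rewrite -mulrA -wM ?(ltW e0) ?(ltW k0) //; apply: (ler_wpM2l (ltW hc)).
    by apply: wle => //; rewrite mulr_gt0.
  apply: le_trans (_ : _ <= C * w b * w k * alpha (n - i)%N) _; last first.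
    rewrite lerDr; apply: (mulr_ge0 (mulr_ge0 (mulr_ge0 (ltW hc) (w_ge0 _)) (w_ge0 _)) aj).
  rewrite [X in _ <= X]mulrC; apply: (ler_wpM2l ad).
  apply: le_trans (IH i (ltn_ord i)) _.
  rewrite -mulrA -wM ?(ltW hb0) ?(ltW k0) //; apply: (ler_wpM2l (ltW C0)).
  apply: wle; first by rewrite mulr_gt0.
  move: h; rewrite /e; lra.
rewrite /a Arec.
apply: le_trans (lerD (hal _ (ltn0Sn n)) (ler_sum _ (fun i _ => key i))) _.
change (c * w k + \sum_(i < n) (c * w e * w k * a i.+1 + C * w b * w k * alpha (n - i)%N) <= C * w k).
rewrite big_split /= -!big_distrr /=.
have hS : \sum_(i < n) a i.+1 <= S0.
  by rewrite -(big_mkord xpredT (fun i => a i.+1)); apply: S_le.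
have hA : \sum_(i < n) alpha (n - i)%N <= T1.
  exact: le_trans (sumrev_le n) hT1.
have p1 : 0 <= c * w e * w k := mulr_ge0 (mulr_ge0 (ltW hc) (w_ge0 _)) (w_ge0 _).
have p2 : 0 <= C * w b * w k := mulr_ge0 (mulr_ge0 (ltW C0) (w_ge0 _)) (w_ge0 _).
apply: le_trans (lerD (lexx _) (lerD (ler_wpM2l p1 hS) (ler_wpM2l p2 hA))) _.
have eC : C * (1 - w b * T1) = c + c * w e * S0.
  by rewrite /C divfK // subr_eq0 gt_eqF.
rewrite le_eqVlt; apply/orP; left; apply/eqP.
transitivity ((c + c * w e * S0) * w k + C * w b * w k * T1); first by ring.
rewrite -eC; ring.
Qed.
Lemma main_ex : exists C0 : R, 0 < C0 /\ forall n, Acoef alpha n.+1 <= C0 * (n.+1%:R) `^ (- gamma).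
Proof. exists C; split; [exact: C_gt0 | exact: mainb]. Qed.
End An.


Theorem lemma12 (R : realType) (alpha : nat -> R) (c gamma : R) :
  (forall j : nat, (0 < j)%N -> 0 <= alpha j) ->
  cvgn (series (fun j : nat => alpha j.+1)) ->
  limn (series (fun j : nat => alpha j.+1)) < 1 ->
  0 < c -> 1 < gamma ->
  (forall j : nat, (0 < j)%N -> alpha j <= c * (j%:R) `^ (- gamma)) ->
  exists C : R, 0 < C /\
    forall k : nat, (0 < k)%N -> Acoef alpha k <= C * (k%:R) `^ (- gamma).
Proof.
move=> ha0 hcv hT1 hc hg hal.
set T := limn _ in hT1.
have T0 : 0 <= T := @T_ge0 R alpha ha0 hcv.
set T1 := (1 + T) / 2.
have hTT1 : T <= T1 by rewrite /T1; lra.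
have hT11 : T1 < 1 by rewrite /T1; lra.
have T10 : 0 <= T1 by rewrite /T1; lra.
have g0 : 0 < gamma by lra.
set r := T1 `^ (gamma^-1).
have r0 : 0 <= r := powR_ge0 _ _.
have r1 : r < 1.
  have := gt0_ltr_powR (r := gamma^-1) _ _ _ hT11.
  by rewrite powR1 invr_gt0 nnegrE T10 nnegrE ler01 => /(_ g0 isT isT).
set b := (1 + r) / 2.
have hb0 : 0 < b by rewrite /b; lra.
have hb1 : b < 1 by rewrite /b; lra.
have hrb : r < b by rewrite /b; lra.
have rg : r `^ gamma = T1.
  by rewrite /r -powRrM mulVf ?gt_eqF // powRr1.
have hbg : T1 < b `^ gamma.
  rewrite -rg; apply: (gt0_ltr_powR g0) => //; rewrite nnegrE //; exact: ltW.
have hrho : b `^ (- gamma) * T1 < 1.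
  rewrite powRN mulrC -ltr_pdivlMr ?div1r ?invrK //.
  by rewrite invr_gt0 powR_gt0.
have [C [C0 HC]] := @main_ex R alpha ha0 hcv T1 hTT1 hT11 c gamma b hc g0 hb0 hb1 hal hrho.
exists C; split => // [[|n]] // _; exact: HC.
Qed.
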